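(* Let $G$ be a finite simple connected graph with no $K_5$ minor, not isomorphic to $C_5$, that has no dynamic $4$-coloring, and suppose $G$ has the minimum number of edges among all such graphs (i.e., every finite simple connected graph with no $K_5$ minor, not isomorphic to $C_5$, and with fewer edges than $G$ is dynamically $4$-colorable). Then $G$ has no separation $(A,B)$ with $|A\cap B|=2$ satisfying both of the following: (i) each vertex in $A\cap B$ has at least two neighbors in the induced subgraph $G[A]$; (ii) if $B\setminus A$ contains a vertex whose set of neighbors (in $G$) is exactly $A\cap B$, then either the two vertices of $A\cap B$ are adjacent or $A\setminus B$ contains a vertex whose set of neighbors is exactly $A\cap B$.
   Context: All graphs are finite and simple. Given a proper vertex coloring of a graph, a vertex $v$ is happy if either $v$ has at most one neighbor or $v$ has two neighbors receiving distinct colors. A dynamic $4$-coloring is a proper vertex coloring with at most $4$ colors in which every vertex is happy. A separation of a graph $G$ is a pair $(A,B)$ of subsets of $V(G)$ with $A\cup B=V(G)$, $A\setminus B\neq\emptyset$, $B\setminus A\neq\emptyset$, and no vertex of $A\setminus B$ adjacent to a vertex of $B\setminus A$; its order is $|A\cap B|$. *)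

(* Defs.v *)
From mathcomp Require Import all_boot.
Set Implicit Arguments. Unset Strict Implicit. Unset Printing Implicit Defensive.

Definition simple_graph (T : finType) (e : rel T) : Prop :=
  symmetric e /\ irreflexive e.

Definition graph_connected (T : finType) (e : rel T) : Prop :=
  forall x y : T, connect e x y.

Definition nedges (T : finType) (e : rel T) : nat :=
  #|[set p : T * T | e p.1 p.2]| %/ 2.

Definition induced_connected (T : finType) (e : rel T) (S : {set T}) : Prop :=
  forall x y, x \in S -> y \in S ->
    connect (fun a b => [&& a \in S, b \in S & e a b]) x y.

Definition has_K5_minor (T : finType) (e : rel T) : Prop :=
  exists f : 'I_5 -> {set T},
    (forall i, f i != set0) /\
    (forall i, induced_connected e (f i)) /\
    (forall i j, i != j -> [disjoint f i & f j]) /\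
    (forall i j, i != j -> exists x y, [/\ x \in f i, y \in f j & e x y]).

Definition c5_rel (i j : 'I_5) : bool :=
  (val j == (val i).+1 %% 5) || (val i == (val j).+1 %% 5).

Definition iso_C5 (T : finType) (e : rel T) : Prop :=
  exists h : T -> 'I_5, bijective h /\ forall x y, e x y = c5_rel (h x) (h y).

Definition proper_coloring (T : finType) (e : rel T) (k : nat) (c : T -> 'I_k) : Prop :=
  forall x y, e x y -> c x != c y.

Definition happy (T : finType) (e : rel T) (k : nat) (c : T -> 'I_k) (v : T) : Prop :=
  #|[set u | e v u]| <= 1 \/ exists u w, [/\ e v u, e v w & c u != c w].

Definition dynamic_coloring (T : finType) (e : rel T) (k : nat) (c : T -> 'I_k) : Prop :=
  proper_coloring e c /\ forall v, happy e c v.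

Definition dyn4_colorable (T : finType) (e : rel T) : Prop :=
  exists c : T -> 'I_4, dynamic_coloring e c.

Definition separation (T : finType) (e : rel T) (A B : {set T}) : Prop :=
  [/\ A :|: B = setT, A :\: B != set0, B :\: A != set0 &
      forall x y, x \in A :\: B -> y \in B :\: A -> ~~ e x y].

Definition nbhd (T : finType) (e : rel T) (v : T) : {set T} := [set u | e v u].

(* Main.v *)
Require Import Defs.
From mathcomp Require Import all_boot.
From Stdlib Require Import Classical.
Set Implicit Arguments. Unset Strict Implicit. Unset Printing Implicit Defensive.

Definition restr (T : finType) (X : {set T}) (g : rel T) : rel T :=
  fun a b => [&& a \in X, b \in X & g a b].

Lemma closureK (T : finType) (r : rel T) (K : {set T}) a b :
  a \in K -> (forall u v, u \in K -> r u v -> v \in K) -> connect r a b -> b \in K.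
Proof.
move=> aK cl /connectP [p pth ->]; elim: p a aK pth => //= c p IH a aK /andP [rac pth].
exact: IH (cl _ _ aK rac) pth.
Qed.

Lemma restr_in (T : finType) (X : {set T}) (g : rel T) a b :
  a \in X -> connect (restr X g) a b -> b \in X.
Proof. by move=> aX; apply: (closureK aX) => u v _ /and3P []. Qed.

Lemma connect_mono (T : finType) (r1 r2 : rel T) a b :
  (forall u v, r1 u v -> r2 u v) -> connect r1 a b -> connect r2 a b.
Proof. by move=> H; apply: connect_sub => u v /H /connect1. Qed.

Lemma restr_sym (T : finType) (X : {set T}) (g : rel T) :
  symmetric g -> symmetric (restr X g).
Proof. by move=> sg a b; rewrite /restr sg andbCA. Qed.

Lemma connect_symm (T : finType) (r : rel T) a b :
  symmetric r -> connect r a b -> connect r b a.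
Proof. by move=> sr; rewrite (sym_connect_sym sr). Qed.

Definition compo (T : finType) (X : {set T}) (g : rel T) (x : T) : {set T} :=
  [set w | connect (restr X g) x w].

Lemma compo_conn (T : finType) (X : {set T}) (g : rel T) x v :
  v \in compo X g x -> connect (restr (compo X g x) g) x v.
Proof.
rewrite inE => Hv.
have : v \in [set w | connect (restr (compo X g x) g) x w].
  apply: (closureK (r := restr X g) _ _ Hv); first by rewrite inE connect0.
  move=> u w; rewrite !inE => Cu Ruw.
  have : u \in compo X g x by apply: restr_in Cu; rewrite inE connect0.
  rewrite inE => Cu'.
  apply: connect_trans Cu (connect1 _).
  rewrite /restr !inE Cu' (connect_trans Cu' (connect1 Ruw)) /=.
  by case/and3P: Ruw.
by rewrite inE.
Qed.

Lemma compo_induced (T : finType) (e : rel T) (X : {set T}) x :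
  symmetric e -> induced_connected e (compo X e x).
Proof.
move=> se a b Ha Hb.
have H1 := compo_conn Ha; have H2 := compo_conn Hb.
have sR : symmetric (restr (compo X e x) e) by apply: restr_sym.
apply: connect_trans (connect_symm sR H1) H2.
Qed.

Lemma escape (T : finType) (e : rel T) (P : {set T}) v t :
  graph_connected e -> v \in P -> t \notin P ->
  exists w w', [/\ connect (restr P e) v w, w \in P, w' \notin P & e w w'].
Proof.
move=> Hc vP tP.
case: (boolP [exists w, exists w', [&& connect (restr P e) v w, w \in P, w' \notin P & e w w']]).
  by move=> /existsP [w /existsP [w' /and4P [? ? ? ?]]]; exists w, w'.
rewrite negb_exists => /forallP H.
have : t \in [set w | connect (restr P e) v w].
  apply: (closureK (r := e) _ _ (Hc v t)); first by rewrite inE connect0.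
  move=> u w; rewrite !inE => Cu euw.
  have uP : u \in P by apply: restr_in Cu.
  case: (boolP (w \in P)) => wP.
    by apply: connect_trans Cu (connect1 _); rewrite /restr uP wP.
  by move: (H u); rewrite negb_exists => /forallP /(_ w); rewrite Cu uP wP euw.
by rewrite inE => /(restr_in vP); rewrite (negbTE tP).
Qed.

Definition srel (T : finType) (X : {set T}) (g : rel T) : rel {v : T | v \in X} :=
  fun u v => g (val u) (val v).
Arguments srel {T} X g.

Lemma srel_connected (T : finType) (X : {set T}) (g : rel T) :
  (forall a b, a \in X -> b \in X -> connect (restr X g) a b) ->
  graph_connected (srel X g).
Proof.
move=> H u v.
suff : val v \in [set w | if insub w is Some w' then connect (srel X g) u w' else false].
  by rewrite inE valK.
apply: (closureK (r := restr X g) _ _ (H _ _ (valP u) (valP v))).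
  by rewrite inE valK connect0.
move=> a b; rewrite !inE; case: insubP => // a' _ <- Ca /and3P [_ Xb gab].
case: insubP => [b' _ Eb|]; last by rewrite Xb.
by apply: connect_trans Ca (connect1 _); rewrite /srel Eb.
Qed.

Lemma srel_simple (T : finType) (X : {set T}) (g : rel T) :
  symmetric g -> irreflexive g -> simple_graph (srel X g).
Proof. by move=> sg ig; split => [u v|u]; rewrite /srel; [apply: sg | apply: ig]. Qed.

Lemma model_K5 (T : finType) (e : rel T) (X : {set T}) (g : rel T) (phi : T -> {set T}) :
  (forall u, u \in X -> phi u != set0) ->
  (forall u, u \in X -> induced_connected e (phi u)) ->
  (forall u v, u \in X -> v \in X -> u != v -> [disjoint phi u & phi v]) ->
  (forall u v, u \in X -> v \in X -> g u v ->
      exists p q, [/\ p \in phi u, q \in phi v & e p q]) ->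
  has_K5_minor (srel X g) -> has_K5_minor e.
Proof.
move=> H1 H2 H3 H4 [F [Fne [Fcon [Fdis Fedge]]]].
exists (fun i => \bigcup_(u in F i) phi (val u)); split; [|split; [|split]].
- move=> i; have /set0Pn [u uF] := Fne i.
  have /set0Pn [p pu] := H1 _ (valP u).
  by apply/set0Pn; exists p; apply/bigcupP; exists u.
- move=> i p q /bigcupP [u uF pu] /bigcupP [v vF qv].
  set U := \bigcup_(u in F i) phi (val u).
  have lift : forall w a b, w \in F i -> a \in phi (val w) -> b \in phi (val w) ->
      connect (fun a b => [&& a \in U, b \in U & e a b]) a b.
    move=> w a b wF aw bw; apply: connect_mono (H2 _ (valP w) _ _ aw bw).
    move=> c d /and3P [cw dw ecd]; rewrite ecd andbT.
    by apply/andP; split; apply/bigcupP; exists w.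
  have : v \in [set w | [forall q', (q' \in phi (val w)) ==> connect (fun a b => [&& a \in U, b \in U & e a b]) p q']].
    apply: (closureK _ _ (Fcon i u v uF vF)).
      by rewrite inE; apply/forallP => q'; apply/implyP => q'u; apply: (lift u).
    move=> w w'; rewrite !inE => /forallP Hw /and3P [wF w'F gww'].
    have [p' [q'' [p'w q''w' ep]]] := H4 _ _ (valP w) (valP w') gww'.
    apply/forallP => q'; apply/implyP => q'w'.
    have := Hw p'; rewrite p'w /= => Cp.
    apply: connect_trans Cp (connect_trans (connect1 _) (lift w' _ _ w'F q''w' q'w')).
    rewrite ep andbT; apply/andP; split; apply/bigcupP; [exists w | exists w'] => //.
  by rewrite inE => /forallP /(_ q); rewrite qv.
- move=> i j ij; apply/pred0P => p /=; apply/negbTE/negP => /andP [].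
  move=> /bigcupP [u uF pu] /bigcupP [v vF pv].
  have uv : val u != val v.
    apply/negP => /eqP /val_inj Euv; subst v.
    by have := Fdis i j ij; move/pred0P/(_ u) => /=; rewrite uF vF.
  by have := H3 _ _ (valP u) (valP v) uv; move/pred0P/(_ p) => /=; rewrite pu pv.
- move=> i j ij; have [u [v [uF vF guv]]] := Fedge i j ij.
  have [p [q [pu qv epq]]] := H4 _ _ (valP u) (valP v) guv.
  by exists p, q; split => //; apply/bigcupP; [exists u | exists v].
Qed.

Lemma model_nedges (T : finType) (e : rel T) (X : {set T}) (g : rel T) (phi : T -> {set T}) p0 q0 :
  symmetric e -> irreflexive e ->
  (forall u v, u \in X -> v \in X -> u != v -> [disjoint phi u & phi v]) ->
  (forall u v, u \in X -> v \in X -> g u v ->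
      exists p q, [/\ p \in phi u, q \in phi v & e p q]) ->
  e p0 q0 ->
  (forall u v, u \in X -> v \in X -> g u v ->
      ~~ ((p0 \in phi u) && (q0 \in phi v)) /\ ~~ ((q0 \in phi u) && (p0 \in phi v))) ->
  nedges (srel X g) < nedges e.
Proof.
move=> se ie H3 H4 e0 H0.
set Pf := [set pr : {v | v \in X} * {v | v \in X} | srel X g pr.1 pr.2].
set Pe := [set pr : T * T | e pr.1 pr.2].
pose m (pr : {v | v \in X} * {v | v \in X}) : T * T :=
  odflt (p0, p0) [pick pq : T * T | [&& pq.1 \in phi (val pr.1), pq.2 \in phi (val pr.2) & e pq.1 pq.2]].
have mP : forall pr, pr \in Pf ->
    [&& (m pr).1 \in phi (val pr.1), (m pr).2 \in phi (val pr.2) & e (m pr).1 (m pr).2].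
  move=> pr; rewrite inE => gpr; rewrite /m; case: pickP => [pq -> //|].
  have [p [q [pu qv epq]]] := H4 _ _ (valP pr.1) (valP pr.2) gpr.
  by move/(_ (p, q)); rewrite /= pu qv epq.
have minj : {in Pf &, injective m}.
  move=> pr1 pr2 H1 H2 Em.
  have := mP _ H1; have := mP _ H2; rewrite Em.
  move=> /and3P [a1 a2 _] /and3P [b1 b2 _].
  have E1 : val pr1.1 = val pr2.1.
    apply/eqP; apply: contraT => Hn.
    by have := H3 _ _ (valP _) (valP _) Hn; move/pred0P/(_ (m pr2).1) => /=; rewrite a1 b1.
  have E2 : val pr1.2 = val pr2.2.
    apply/eqP; apply: contraT => Hn.
    by have := H3 _ _ (valP _) (valP _) Hn; move/pred0P/(_ (m pr2).2) => /=; rewrite a2 b2.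
  move: E1 E2 => /val_inj E1 /val_inj E2.
  by rewrite [pr1]surjective_pairing [pr2]surjective_pairing E1 E2.
have sub : m @: Pf \subset Pe :\: [set (p0, q0); (q0, p0)].
  apply/subsetP => pq /imsetP [pr Hpr ->].
  have /and3P [a1 a2 a3] := mP _ Hpr.
  rewrite !inE a3 andbT; move: Hpr; rewrite inE => gpr.
  have [n1 n2] := H0 _ _ (valP pr.1) (valP pr.2) gpr.
  apply/negP => /orP [] /eqP Eq; rewrite Eq /= in a1 a2.
    by move: n1; rewrite a1 a2.
  by move: n2; rewrite a1 a2.
have c1 : #|Pf| <= #|Pe| - 2.
  rewrite -(card_in_imset minj).
  apply: leq_trans (subset_leq_card sub) _.
  rewrite cardsD.
  have -> : Pe :&: [set (p0, q0); (q0, p0)] = [set (p0, q0); (q0, p0)].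
    apply/setIidPr/subsetP => pq; rewrite !inE => /orP [] /eqP -> //=.
    by rewrite se.
  rewrite cards2.
  have -> : (p0, q0) != (q0, p0).
    apply/negP => /eqP [E _]; by move: e0; rewrite E ie.
  by [].
have c2 : 2 <= #|Pe|.
  apply: leq_trans (subset_leq_card (_ : [set (p0, q0); (q0, p0)] \subset Pe)).
    rewrite cards2.
    have -> : (p0, q0) != (q0, p0).
      apply/negP => /eqP [E _]; by move: e0; rewrite E ie.
    by [].
  apply/subsetP => pq; rewrite !inE => /orP [] /eqP -> //=.
  by rewrite se.
have c3 : #|Pf| + 2 <= #|Pe| by rewrite addnC -leq_subRL.
rewrite /nedges; apply: leq_trans (leq_div2r 2 c3).
by rewrite divnDr // divnn addn1 ltnSn.
Qed.

Definition liftc (T : finType) (X : {set T}) (c : {v : T | v \in X} -> 'I_4) (v : T) : 'I_4 :=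
  if insub v is Some u then c u else ord0.

Lemma liftcE (T : finType) (X : {set T}) (c : {v : T | v \in X} -> 'I_4) u :
  liftc c (val u) = c u.
Proof. by rewrite /liftc valK. Qed.

Lemma liftc_proper (T : finType) (X : {set T}) (g : rel T) (c : {v : T | v \in X} -> 'I_4) u v :
  proper_coloring (srel X g) c -> u \in X -> v \in X -> g u v -> liftc c u != liftc c v.
Proof.
move=> Hp uX vX guv.
have := Hp (exist _ u uX) (exist _ v vX) guv.
by rewrite -(liftcE c (exist _ u uX)) -(liftcE c (exist _ v vX)).
Qed.

Lemma img_nbhd (T : finType) (e : rel T) (X : {set T}) (g : rel T) v (Hv : v \in X) :
  (forall w, w \in X -> g v w = e v w) ->
  val @: [set u : {w : T | w \in X} | srel X g (exist _ v Hv) u] = [set w in X | e v w].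
Proof.
move=> Hg; apply/setP => w; rewrite inE; apply/imsetP/idP.
  by move=> [u]; rewrite inE /srel /= => gu ->; rewrite (valP u) -Hg // (valP u).
move=> /andP [wX evw]; exists (exist _ w wX) => //.
by rewrite inE /srel /= Hg.
Qed.

Lemma happy_ext (T : finType) (e : rel T) (c1 c2 : T -> 'I_4) v :
  (forall u, e v u -> c1 u = c2 u) -> happy e c1 v -> happy e c2 v.
Proof.
move=> H [H1|[u [w [eu ew cuw]]]]; [by left|right].
by exists u, w; rewrite -!H.
Qed.

Lemma happy_transfer (T : finType) (e : rel T) (X : {set T}) (g : rel T)
    (c : {v : T | v \in X} -> 'I_4) v (Hv : v \in X) :
  (forall w, e v w -> w \in X) -> (forall w, w \in X -> g v w = e v w) ->
  happy (srel X g) c (exist _ v Hv) -> happy e (liftc c) v.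
Proof.
move=> Hn Hg [H1|[u [w [gu gw cuw]]]].
  left; have E : [set w | e v w] = [set w in X | e v w].
    apply/setP => w; rewrite !inE.
    by case: (boolP (e v w)) => [/Hn ->|]; rewrite ?andbF.
  by rewrite E -(img_nbhd (e:=e) Hv Hg) card_imset //; exact: val_inj.
right; exists (val u), (val w); rewrite !liftcE.
by split => //; rewrite -Hg ?(valP u) ?(valP w).
Qed.

Definition hapin (T : finType) (e : rel T) (c : T -> 'I_4) (X : {set T}) v :=
  exists u w, [/\ e v u, e v w, u \in X, w \in X & c u != c w].

Lemma hapin_transfer (T : finType) (e : rel T) (X : {set T}) (g : rel T)
    (c : {v : T | v \in X} -> 'I_4) v (Hv : v \in X) :
  2 <= #|[set w in X | e v w]| -> (forall w, w \in X -> g v w = e v w) ->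
  happy (srel X g) c (exist _ v Hv) -> hapin e (liftc c) X v.
Proof.
move=> Hd Hg [H1|[u [w [gu gw cuw]]]].
  move: H1; rewrite -(card_imset _ val_inj) (img_nbhd (e := e)) // => H1.
  by move: (leq_trans Hd H1).
exists (val u), (val w); rewrite !liftcE (valP u) (valP w).
by split => //; rewrite -Hg ?(valP u) ?(valP w).
Qed.

Lemma hapin_happy (T : finType) (e : rel T) (c1 c2 : T -> 'I_4) (X : {set T}) v :
  (forall u, u \in X -> c1 u = c2 u) -> hapin e c1 X v -> happy e c2 v.
Proof.
move=> H [u [w [eu ew uX wX cuw]]]; right; exists u, w.
by rewrite -!H.
Qed.

Lemma happy_inj (T : finType) (e : rel T) (c : T -> 'I_4) (p : 'I_4 -> 'I_4) v :
  injective p -> happy e c v -> happy e (fun w => p (c w)) v.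
Proof.
move=> pi [H|[u [w [eu ew cuw]]]]; [by left|right].
by exists u, w; rewrite (inj_eq pi).
Qed.

Lemma hapin_inj (T : finType) (e : rel T) (c : T -> 'I_4) (p : 'I_4 -> 'I_4) X v :
  injective p -> hapin e c X v -> hapin e (fun w => p (c w)) X v.
Proof.
move=> pi [u [w [eu ew uX wX cuw]]].
by exists u, w; rewrite (inj_eq pi).
Qed.

Definition c5n (i j : nat) : bool := (j == i.+1 %% 5) || (i == j.+1 %% 5).
Definition ddk (k n : nat) : nat := (n + 5 - k) %% 5.
Definition tbl (n : nat) : nat := nth 0 [:: 0; 1; 2; 3; 1] n.

Lemma all5 (P : nat -> bool) : all P (iota 0 5) -> forall i, i < 5 -> P i.
Proof. by move=> /allP H i Hi; apply: H; rewrite mem_iota. Qed.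

Lemma chk_proper : all (fun i => all (fun j => all (fun k =>
   c5n i j ==> (tbl (ddk k i) != tbl (ddk k j))) (iota 0 5)) (iota 0 5)) (iota 0 5).
Proof. by vm_compute. Qed.
Lemma chk_happy : all (fun i => all (fun k =>
   (i != k) ==> (tbl (ddk k ((i + 1) %% 5)) != tbl (ddk k ((i + 4) %% 5)))) (iota 0 5)) (iota 0 5).
Proof. by vm_compute. Qed.
Lemma chk_nbr : all (fun j => all (fun k =>
   c5n k j ==> (tbl (ddk k j) == 1)) (iota 0 5)) (iota 0 5).
Proof. by vm_compute. Qed.
Lemma chk_non : all (fun j => all (fun k =>
   (j != k) ==> ~~ c5n k j ==> (tbl (ddk k j) != 1) && (tbl (ddk k j) != tbl (ddk k k))) (iota 0 5)) (iota 0 5).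
Proof. by vm_compute. Qed.
Lemma chk_wit : all (fun i => c5n i ((i + 1) %% 5) && c5n i ((i + 4) %% 5) && ((i + 1) %% 5 != (i + 4) %% 5)) (iota 0 5).
Proof. by vm_compute. Qed.
Lemma tbl_lt n : tbl n < 4.
Proof. by do 5! (case: n => [//|n]); case: n. Qed.

Lemma inord4_eq (a b : nat) : a < 4 -> b < 4 -> ((inord a : 'I_4) == inord b) = (a == b).
Proof. by move=> Ha Hb; apply/eqP/eqP => [H|->//]; have := congr1 (@nat_of_ord _) H; rewrite !inordK. Qed.

Lemma c5_table (U : finType) (f : rel U) : iso_C5 f -> forall u0,
  exists (c : U -> 'I_4) (al : 'I_4), [/\ proper_coloring f c,
    forall v, v != u0 -> happy f c v,
    forall v, f u0 v -> c v = al &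
    forall v, v != u0 -> ~~ f u0 v -> (c v != al) && (c v != c u0)].
Proof.
move=> [h [hb Hf]] u0.
have hi := bij_inj hb.
case: hb => hinv hK Kh.
set k := val (h u0).
exists (fun v => inord (tbl (ddk k (h v)))), (inord 1); split.
- move=> v w; rewrite Hf inord4_eq ?tbl_lt // => H.
  have := all5 chk_proper (ltn_ord (h v)) => /all5 /(_ _ (ltn_ord (h w))).
  by move=> /all5 /(_ _ (ltn_ord (h u0))) /implyP; apply.
- move=> v vu; right.
  pose n1 : 'I_5 := inord (((h v) + 1) %% 5); pose n2 : 'I_5 := inord (((h v) + 4) %% 5).
  have E1 : (n1 : nat) = ((h v) + 1) %% 5 by rewrite inordK // ltn_mod.
  have E2 : (n2 : nat) = ((h v) + 4) %% 5 by rewrite inordK // ltn_mod.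
  have /andP [/andP [w1 w2] _] := all5 chk_wit (ltn_ord (h v)).
  have E1' : \val n1 = ((h v) + 1) %% 5 by exact: E1.
  have E2' : \val n2 = ((h v) + 4) %% 5 by exact: E2.
  exists (hinv n1), (hinv n2); rewrite !Hf !Kh /c5_rel; split.
  - by rewrite E1'; exact: w1.
  - by rewrite E2'; exact: w2.
  rewrite E1 E2 inord4_eq ?tbl_lt //.
  have := all5 chk_happy (ltn_ord (h v)) => /all5 /(_ _ (ltn_ord (h u0))) /implyP; apply.
  by apply: contra vu; rewrite val_eqE => /eqP /hi ->.
- move=> v; rewrite Hf => H; apply/eqP; rewrite inord4_eq ?tbl_lt //.
  have := all5 chk_nbr (ltn_ord (h v)) => /all5 /(_ _ (ltn_ord (h u0))) /implyP; apply.
  exact: H.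
- move=> v vu; rewrite Hf => H; rewrite !inord4_eq ?tbl_lt //.
  have := all5 chk_non (ltn_ord (h v)) => /all5 /(_ _ (ltn_ord (h u0))) /implyP Hi.
  have Hne : (h v : nat) != h u0 by apply: contra vu; rewrite val_eqE => /eqP /hi ->.
  by move/implyP: (Hi Hne); apply.
Qed.

Definition minimal_hyp (T : finType) (e : rel T) :=
  forall (T' : finType) (e' : rel T'),
      simple_graph e' -> graph_connected e' -> ~ has_K5_minor e' -> ~ iso_C5 e' ->
      nedges e' < nedges e -> dyn4_colorable e'.

Lemma ACL (T : finType) (e : rel T) (U : finType) (f : rel U) :
  minimal_hyp e -> simple_graph f -> graph_connected f -> ~ has_K5_minor f ->
  nedges f < nedges e -> forall u0,
  exists c : U -> 'I_4, [/\ proper_coloring f c,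
    forall v, v != u0 -> happy f c v &
    happy f c u0 \/ exists al : 'I_4, (forall v, f u0 v -> c v = al) /\
      (forall v, v != u0 -> ~~ f u0 v -> (c v != al) && (c v != c u0))].
Proof.
move=> Hm Hs Hc HK Hn u0.
case: (classic (iso_C5 f)) => Hi.
  have [c [al [H1 H2 H3 H4]]] := c5_table Hi u0.
  by exists c; split => //; right; exists al.
have [c [Hp Hh]] := Hm _ _ Hs Hc HK Hi Hn.
by exists c; split => //; left.
Qed.

Definition sw (a b z : 'I_4) : 'I_4 := if z == a then b else if z == b then a else z.

Lemma swK a b : involutive (sw a b).
Proof.
move=> z; rewrite /sw.
case: (z =P a) => [->|za]; first by rewrite eqxx; case: (b =P a) => // ->.
case: (z =P b) => [->|zb]; first by rewrite eqxx; case: (a =P b) => // ->.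
by move/eqP/negbTE: za => ->; move/eqP/negbTE: zb => ->.
Qed.

Lemma sw_inj a b : injective (sw a b).
Proof. exact: inv_inj (swK a b). Qed.

Lemma sw_fix a b z : z != a -> z != b -> sw a b z = z.
Proof. by rewrite /sw => /negbTE -> /negbTE ->. Qed.

Lemma swL a b : sw a b a = b.
Proof. by rewrite /sw eqxx. Qed.

Lemma avoid3 (p q r : 'I_4) : exists t : 'I_4, [&& t != p, t != q & t != r].
Proof.
apply/existsP; apply: contraT; rewrite negb_exists => /forallP H.
have : #|'I_4| <= #|[set p; q; r]|.
  apply: subset_leq_card; apply/subsetP => t _; move: (H t).
  by rewrite !inE -!negb_or negbK orbA.
rewrite card_ord => H4.
have : #|[set p; q; r]| <= 3.
  have E : [set p; q; r] =i [:: p; q; r] by move=> t; rewrite !inE orbA.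
  rewrite (eq_card E).
  exact: card_size.
by move=> H3; have := leq_trans H4 H3.
Qed.

Lemma perm_lemma (a1 a2 a3 b1 b2 g : 'I_4) : (a1 == a2) = (b1 == b2) ->
  exists p : 'I_4 -> 'I_4, [/\ injective p, p a1 = b1, p a2 = b2 &
     (a3 != a1 -> a3 != a2 -> p a3 != g)].
Proof.
move=> Heq.
pose p2 := fun z => sw (sw a1 b1 a2) b2 (sw a1 b1 z).
have i2 : injective p2 by move=> z1 z2 /sw_inj /sw_inj.
have E1 : p2 a1 = b1.
  rewrite /p2 swL.
  case: (a1 =P a2) => [Ea|na].
    subst a2; have/eqP Eb : b1 == b2 by rewrite -Heq.
    by rewrite -Eb !swL.
  apply: sw_fix; last by apply/negP => /eqP Eb; move: Heq; rewrite Eb eqxx => /eqP /na.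
  by rewrite -{1}(swL a1 b1) (inj_eq (@sw_inj _ _)); apply/eqP.
have E2 : p2 a2 = b2 by rewrite /p2 swL.
case: (boolP [&& a3 != a1, a3 != a2 & p2 a3 == g]) => Hg; last first.
  exists p2; split => // n1 n2; apply: contra Hg => Hg.
  by rewrite n1 n2 Hg.
case/and3P: Hg => n1 n2 /eqP Hg.
have m1 : b1 != p2 a3 by rewrite -E1 (inj_eq i2) eq_sym.
have m2 : b2 != p2 a3 by rewrite -E2 (inj_eq i2) eq_sym.
have [t' /and3P [t1 t2 t3]] := avoid3 b1 b2 (p2 a3).
exists (fun z => sw (p2 a3) t' (p2 z)); split.
- by move=> z1 z2 /sw_inj /i2.
- by rewrite E1 sw_fix // eq_sym.
- by rewrite E2 sw_fix // eq_sym.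
- by move=> _ _; rewrite swL -Hg.
Qed.

Record setting (T : finType) (e : rel T) (A B : {set T}) (x y : T) : Prop := Setting {
  s_sym : symmetric e;
  s_irr : irreflexive e;
  s_conn : graph_connected e;
  s_cover : A :|: B = setT;
  s_A : A :\: B != set0;
  s_B : B :\: A != set0;
  s_sep : forall u v, u \in A :\: B -> v \in B :\: A -> ~~ e u v;
  s_S : A :&: B = [set x; y];
  s_xy : x != y;
  s_dx : 2 <= #|[set u in A | e x u]|;
  s_dy : 2 <= #|[set u in A | e y u]| }.

Lemma setting_swap (T : finType) (e : rel T) A B x y :
  setting e A B x y -> setting e A B y x.
Proof.
move=> [? ? ? ? ? ? ? HS ? ? ?]; split => //.
  by rewrite HS; apply/setP => v; rewrite !inE orbC.
by rewrite eq_sym.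
Qed.

Lemma reach (T : finType) (e : rel T) (P Q : {set T}) v :
  symmetric e -> graph_connected e -> P :|: Q = setT ->
  (forall u w, u \in P :\: Q -> w \in Q :\: P -> ~~ e u w) -> Q :\: P != set0 -> v \in P ->
  exists2 s, s \in P :&: Q & connect (restr P e) v s.
Proof.
move=> se Hc Hcov Hsep /set0Pn [t tQ] vP.
case: (boolP (v \in Q)) => vQ; first by exists v; rewrite ?inE ?vP // connect0.
have vPQ : v \in P :\: Q by rewrite inE vQ.
have tPQ : t \notin P :\: Q by move: tQ; rewrite !inE => /andP [/negbTE -> _]; rewrite andbF.
have [w [w' [Cw wP w'P ew]]] := escape Hc vPQ tPQ.
have w'P' : w' \in P.
  apply: contraT => Hn; have : w' \in Q:\:P.
    by rewrite inE Hn /=; move: (in_setT w'); rewrite -Hcov inE (negbTE Hn).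
  by move/(Hsep _ _ wP); rewrite ew.
have w'Q : w' \in Q by move: w'P; rewrite inE w'P' andbT negbK.
exists w'; first by rewrite inE w'P' w'Q.
apply: connect_trans (connect_mono _ Cw) (connect1 _).
  by move=> a b /and3P [aP bP eab]; rewrite /restr eab; move: aP bP; rewrite !inE => /andP [_ ->] /andP [_ ->].
by rewrite /restr w'P' ew; move: wP; rewrite inE => /andP [_ ->].
Qed.


Lemma S_mem (T : finType) (e : rel T) A B x y v :
  setting e A B x y -> (v \in A :&: B) = (v == x) || (v == y).
Proof. by case=> _ _ _ _ _ _ _ -> *; rewrite !inE. Qed.

Lemma xA (T : finType) (e : rel T) A B x y : setting e A B x y ->
  [/\ x \in A, x \in B, y \in A & y \in B].
Proof.
move=> Hs; have := S_mem x Hs; have := S_mem y Hs; rewrite !eqxx orbT /=.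
by rewrite !inE => /andP [-> ->] /andP [-> ->].
Qed.

Lemma Aprime (T : finType) (e : rel T) A B x y v :
  setting e A B x y -> v \in A -> v != x -> v != y -> v \in A :\: B.
Proof.
move=> Hs vA vx vy; rewrite inE vA andbT; apply/negP => vB.
by have := S_mem v Hs; rewrite inE vA vB (negbTE vx) (negbTE vy).
Qed.

Lemma Bprime (T : finType) (e : rel T) A B x y v :
  setting e A B x y -> v \in B -> v != x -> v != y -> v \in B :\: A.
Proof.
move=> Hs vB vx vy; rewrite inE vB andbT; apply/negP => vA.
by have := S_mem v Hs; rewrite inE vA vB (negbTE vx) (negbTE vy).
Qed.

Lemma nbrA (T : finType) (e : rel T) A B x y a w :
  setting e A B x y -> a \in A :\: B -> e a w -> w \in A.
Proof.
move=> Hs aA eaw; apply: contraT => wA.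
have wB : w \in B :\: A.
  rewrite inE wA /=; move: (in_setT w); rewrite -(s_cover Hs) inE (negbTE wA) //.
by have := s_sep Hs aA wB; rewrite eaw.
Qed.

Lemma nbrB (T : finType) (e : rel T) A B x y b w :
  setting e A B x y -> b \in B :\: A -> e b w -> w \in B.
Proof.
move=> Hs bB ebw; apply: contraT => wB.
have wA : w \in A :\: B.
  rewrite inE wB /=; move: (in_setT w); rewrite -(s_cover Hs) inE (negbTE wB) orbF //.
by have := s_sep Hs wA bB; rewrite (s_sym Hs) ebw.
Qed.

Lemma x_Anbr (T : finType) (e : rel T) A B x y :
  setting e A B x y -> exists2 a, a \in A :\: B & e x a.
Proof.
move=> Hs; have := s_dx Hs => /card_gt1P [u [w [uA wA uw]]].
move: uA wA; rewrite !inE => /andP [uA eu] /andP [wA ew].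
have ux : u != x by apply: contraTneq eu => ->; rewrite (s_irr Hs).
have wx : w != x by apply: contraTneq ew => ->; rewrite (s_irr Hs).
case: (boolP (u == y)) => uy.
  exists w => //; apply: (Aprime Hs) => //.
  by apply: contra uw => /eqP ->.
by exists u => //; apply: (Aprime Hs).
Qed.

Lemma some_Bnbr (T : finType) (e : rel T) A B x y :
  setting e A B x y -> exists s, [/\ (s == x) || (s == y), s \in B & exists2 b, b \in B :\: A & e s b].
Proof.
move=> Hs; have /set0Pn [v vB] := s_B Hs; have /set0Pn [t tA] := s_A Hs.
have tB : t \notin B :\: A by move: tA; rewrite !inE => /andP [/negbTE -> _]; rewrite andbF.
have [w [w' [_ wB w'B ew]]] := escape (s_conn Hs) vB tB.
have w'B' : w' \in B.
  apply: contraT => Hn; have w'A : w' \in A :\: B.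
    by rewrite inE Hn /=; move: (in_setT w'); rewrite -(s_cover Hs) inE (negbTE Hn) orbF.
  by have := s_sep Hs w'A wB; rewrite (s_sym Hs) ew.
have w'A : w' \in A by move: w'B; rewrite inE w'B' andbT negbK.
exists w'; split => //.
  by rewrite -(S_mem _ Hs) inE w'A w'B'.
by exists w => //; rewrite (s_sym Hs).
Qed.

Definition mix (T : finType) (A : {set T}) (cA cB : T -> 'I_4) (v : T) : 'I_4 :=
  if v \in A then cA v else cB v.

Lemma comb (T : finType) (e : rel T) A B x y (cA cB : T -> 'I_4) :
  setting e A B x y ->
  (forall u v, u \in A -> v \in A -> e u v -> cA u != cA v) ->
  (forall u v, u \in B -> v \in B -> e u v -> cB u != cB v) ->
  cA x = cB x -> cA y = cB y ->
  (forall a, a \in A :\: B -> happy e cA a) ->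
  (forall b, b \in B :\: A -> happy e cB b) ->
  happy e (mix A cA cB) x -> happy e (mix A cA cB) y ->
  dyn4_colorable e.
Proof.
move=> Hs HA HB Ex Ey hA hB hx hy.
have onB : forall v, v \in B -> mix A cA cB v = cB v.
  move=> v vB; rewrite /mix; case: ifP => // vA.
  have := S_mem v Hs; rewrite inE vA vB /= => /esym /orP [] /eqP ->; by [].
have onA : forall v, v \in A -> mix A cA cB v = cA v by move=> v vA; rewrite /mix vA.
have cov : forall v, (v \in A) || (v \in B).
  by move=> v; move: (in_setT v); rewrite -(s_cover Hs) inE.
exists (mix A cA cB); split.
  move=> u v euv.
  case: (boolP (u \in A)) => uA; case: (boolP (v \in A)) => vA.
  - by rewrite !onA //; apply: HA.
  - have vB : v \in B by move: (cov v); rewrite (negbTE vA).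
    have uB : u \in B.
      apply: contraT => uB; have uA' : u \in A :\: B by rewrite inE uB.
      have vB' : v \in B :\: A by rewrite inE vA.
      by have := s_sep Hs uA' vB'; rewrite euv.
    by rewrite !onB //; apply: HB.
  - have uB : u \in B by move: (cov u); rewrite (negbTE uA).
    have vB : v \in B.
      apply: contraT => vB; have vA' : v \in A :\: B by rewrite inE vB.
      have uB' : u \in B :\: A by rewrite inE uA.
      by have := s_sep Hs vA' uB'; rewrite (s_sym Hs) euv.
    by rewrite !onB //; apply: HB.
  - have uB : u \in B by move: (cov u); rewrite (negbTE uA).
    have vB : v \in B by move: (cov v); rewrite (negbTE vA).
    by rewrite !onB //; apply: HB.
move=> v.
case: (boolP (v == x)) => [/eqP -> //|vx]; case: (boolP (v == y)) => [/eqP -> //|vy].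
case: (boolP (v \in A)) => vA.
  have vA' := Aprime Hs vA vx vy.
  apply: happy_ext (hA _ vA') => u evu; rewrite onA //.
  exact: nbrA Hs vA' evu.
have vB : v \in B by move: (cov v); rewrite (negbTE vA).
have vB' := Bprime Hs vB vx vy.
apply: happy_ext (hB _ vB') => u evu; rewrite onB //.
exact: nbrB Hs vB' evu.
Qed.

Lemma sub_neq (T : finType) (X : {set T}) a b (Ha : a \in X) (Hb : b \in X) :
  a != b -> exist (fun v => v \in X) a Ha != exist _ b Hb.
Proof. by apply: contra => /eqP [->]. Qed.

Lemma induced_K5 (T : finType) (e : rel T) (X : {set T}) :
  ~ has_K5_minor e -> ~ has_K5_minor (srel X e).
Proof.
move=> HK HX; apply: HK; apply: (model_K5 (phi := fun u => [set u])) HX.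
- by move=> u _; apply/set0Pn; exists u; rewrite inE.
- by move=> u _ a b; rewrite !inE => /eqP -> /eqP ->; rewrite connect0.
- by move=> u v _ _ uv; apply/pred0P => w /=; rewrite !inE; apply/negbTE/negP => /andP [/eqP -> /eqP E]; move: uv; rewrite E eqxx.
- by move=> u v _ _ euv; exists u, v; rewrite !inE !eqxx.
Qed.

Lemma induced_nedges (T : finType) (e : rel T) (X : {set T}) p0 q0 :
  symmetric e -> irreflexive e -> e p0 q0 -> q0 \notin X -> nedges (srel X e) < nedges e.
Proof.
move=> se ie e0 qX; apply: (model_nedges (phi := fun u => [set u])) e0 _ => //.
- by move=> u v _ _ uv; apply/pred0P => w /=; rewrite !inE; apply/negbTE/negP => /andP [/eqP -> /eqP E]; move: uv; rewrite E eqxx.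
- by move=> u v _ _ euv; exists u, v; rewrite !inE !eqxx.
- move=> u v uX vX _; rewrite !inE; split; apply/negP => /andP.
    by move=> [_ /eqP E]; move: qX; rewrite E vX.
  by move=> [/eqP E _]; move: qX; rewrite E uX.
Qed.

Lemma induced_conn (T : finType) (e : rel T) (P Q : {set T}) x y :
  symmetric e -> graph_connected e -> P :|: Q = setT ->
  (forall u w, u \in P :\: Q -> w \in Q :\: P -> ~~ e u w) -> Q :\: P != set0 ->
  P :&: Q = [set x; y] -> connect (restr P e) x y -> graph_connected (srel P e).
Proof.
move=> se Hc Hcov Hsep HQ HS Cxy; apply: srel_connected => a b aP bP.
have sR := restr_sym P se.
have [s1 s1S C1] := reach se Hc Hcov Hsep HQ aP.
have [s2 s2S C2] := reach se Hc Hcov Hsep HQ bP.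
apply: connect_trans C1 (connect_trans _ (connect_symm sR C2)).
move: s1S s2S; rewrite HS !inE => /orP [] /eqP -> /orP [] /eqP ->; rewrite ?connect0 //.
exact: connect_symm sR Cxy.
Qed.

Lemma ACL_ind (T : finType) (e : rel T) (X : {set T}) p0 q0 :
  minimal_hyp e -> ~ has_K5_minor e -> symmetric e -> irreflexive e ->
  graph_connected (srel X e) -> e p0 q0 -> q0 \notin X -> forall u0,
  exists c : {v | v \in X} -> 'I_4, [/\ proper_coloring (srel X e) c,
    forall v, v != u0 -> happy (srel X e) c v &
    happy (srel X e) c u0 \/ exists al : 'I_4, (forall v, srel X e u0 v -> c v = al) /\
      (forall v, v != u0 -> ~~ srel X e u0 v -> (c v != al) && (c v != c u0))].
Proof.
move=> Hm HK se ie Hc e0 qX; apply: (@ACL T e _ (srel X e) Hm) => //.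
- exact: srel_simple.
- exact: induced_K5.
- exact: induced_nedges e0 qX.
Qed.

Lemma card2_of (T : finType) (S : {set T}) a b : a \in S -> b \in S -> a != b -> 2 <= #|S|.
Proof. by move=> aS bS ab; apply/card_gt1P; exists a, b. Qed.

Lemma mix_onA (T : finType) (A : {set T}) cA cB v : v \in A -> mix A cA cB v = cA v.
Proof. by rewrite /mix => ->. Qed.

Lemma mix_onB (T : finType) (e : rel T) A B x y cA cB v :
  setting e A B x y -> cA x = cB x -> cA y = cB y -> v \in B -> mix A cA cB v = cB v.
Proof.
move=> Hs Ex Ey vB; rewrite /mix; case: ifP => // vA.
have := S_mem v Hs; rewrite inE vA vB /= => /esym /orP [] /eqP E; by rewrite E.
Qed.

Lemma sepBA (T : finType) (e : rel T) A B x y : setting e A B x y ->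
  forall u w, u \in B :\: A -> w \in A :\: B -> ~~ e u w.
Proof. by move=> Hs u w uB wA; rewrite (s_sym Hs); apply: (s_sep Hs). Qed.

Lemma conn_A (T : finType) (e : rel T) A B x y : setting e A B x y ->
  connect (restr A e) x y -> graph_connected (srel A e).
Proof.
move=> Hs; apply: (induced_conn (s_sym Hs) (s_conn Hs) (s_cover Hs) (s_sep Hs) (s_B Hs) (s_S Hs)).
Qed.

Lemma conn_B (T : finType) (e : rel T) A B x y : setting e A B x y ->
  connect (restr B e) x y -> graph_connected (srel B e).
Proof.
move=> Hs; apply: (induced_conn (s_sym Hs) (s_conn Hs) _ (sepBA Hs) (s_A Hs)).
  by rewrite setUC (s_cover Hs).
by rewrite setIC (s_S Hs).
Qed.

Lemma caseI (T : finType) (e : rel T) A B x y :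
  minimal_hyp e -> ~ has_K5_minor e -> setting e A B x y -> e x y ->
  (exists2 b, b \in B :\: A & e x b) -> dyn4_colorable e.
Proof.
move=> Hm HK Hs exy [b bB exb].
have se := s_sym Hs; have ie := s_irr Hs.
have [xA xB yA yB] := xA Hs.
have [a aA exa] := x_Anbr Hs.
have bA : b \notin A by move: bB; rewrite inE => /andP [].
have aB : a \notin B by move: aA; rewrite inE => /andP [].
have CA : graph_connected (srel A e).
  by apply: (conn_A Hs); apply: connect1; rewrite /restr xA yA exy.
have CB : graph_connected (srel B e).
  by apply: (conn_B Hs); apply: connect1; rewrite /restr xB yB exy.
have [cA0 [pA hA _]] := ACL_ind Hm HK se ie CA exb bA (exist _ x xA).
have [cB0 [pB hB _]] := ACL_ind Hm HK se ie CB exa aB (exist _ y yB).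
set cA := liftc cA0.
have nA : cA x != cA y by apply: (liftc_proper pA).
have nB : liftc cB0 x != liftc cB0 y by apply: (liftc_proper pB).
have Heq : (liftc cB0 x == liftc cB0 y) = (cA x == cA y) by rewrite (negbTE nA) (negbTE nB).
have [p [pi px py _]] := @perm_lemma (liftc cB0 x) (liftc cB0 y) (cA x) (cA x) (cA y) (cA x) Heq.
set cB := fun v => p (liftc cB0 v).
have Ex : cA x = cB x by rewrite /cB px.
have Ey : cA y = cB y by rewrite /cB py.
have xy : x != y := s_xy Hs.
apply: (comb (cA := cA) (cB := cB) Hs) => //.
- by move=> u v uA vA euv; apply: (liftc_proper pA).
- by move=> u v uB vB euv; rewrite /cB (inj_eq pi); apply: (liftc_proper pB).
- move=> v vA'; have vA : v \in A by move: vA'; rewrite inE => /andP [].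
  apply: (happy_transfer (Hv := vA) (g := e)).
  + by move=> w; apply: (nbrA Hs).
  + by [].
  apply: hA; apply: sub_neq; by apply: contraTneq vA' => ->; rewrite inE xB.
- move=> v vB'; have vB : v \in B by move: vB'; rewrite inE => /andP [].
  apply: happy_inj => //; apply: (happy_transfer (Hv := vB) (g := e)).
  + by move=> w; apply: (nbrB Hs).
  + by [].
  apply: hB; apply: sub_neq; by apply: contraTneq vB' => ->; rewrite inE yA.
- apply: (hapin_happy (X := B) (c1 := cB)).
    by move=> u uB; rewrite (mix_onB Hs Ex Ey uB).
  apply: hapin_inj => //; apply: (hapin_transfer (Hv := xB)) => //.
    apply: (card2_of (a := y) (b := b)).
    + by rewrite inE yB exy.
    + by rewrite inE exb andbT; move: bB; rewrite inE => /andP [].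
    + by apply: contraNneq bA => <-.
  by apply: hB; apply: sub_neq.
- apply: (hapin_happy (X := A) (c1 := cA)).
    by move=> u uA; rewrite mix_onA.
  apply: (hapin_transfer (Hv := yA)) => //; first exact: s_dy Hs.
  by apply: hA; apply: sub_neq; rewrite eq_sym.
Qed.

Lemma compo_self (T : finType) (X : {set T}) (g : rel T) x : x \in compo X g x.
Proof. by rewrite inE connect0. Qed.

Lemma compo_sub (T : finType) (X : {set T}) (g : rel T) x u :
  x \in X -> u \in compo X g x -> u \in X.
Proof. by move=> xX; rewrite inE; apply: restr_in. Qed.

Lemma compo_step (T : finType) (X : {set T}) (g : rel T) x u u' :
  x \in X -> u \in compo X g x -> u' \in X -> g u u' -> u' \in compo X g x.
Proof.
move=> xX uC u'X guu'; have uX := compo_sub xX uC.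
move: uC; rewrite !inE => C; apply: connect_trans C (connect1 _).
by rewrite /restr uX u'X.
Qed.

Lemma compo_disj (T : finType) (X : {set T}) (g : rel T) x y v :
  symmetric g -> ~~ connect (restr X g) x y -> v \in compo X g x -> v \notin compo X g y.
Proof.
move=> sg nC; rewrite !inE => C1; apply: contra nC => C2.
exact: connect_trans C1 (connect_symm (restr_sym X sg) C2).
Qed.

Lemma III_nbr (T : finType) (e : rel T) A B x y :
  setting e A B x y -> ~~ connect (restr A e) x y -> exists2 b, b \in B :\: A & e x b.
Proof.
move=> Hs nC; have [xA xB yA yB] := xA Hs.
have yC : y \notin compo A e x by rewrite inE.
have [w [w' [_ wC w'C ew]]] := escape (s_conn Hs) (compo_self A e x) yC.
have wA := compo_sub xA wC.
have w'A : w' \notin A by apply: contra w'C => w'A; apply: compo_step ew.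
have w'B : w' \in B by move: (in_setT w'); rewrite -(s_cover Hs) inE (negbTE w'A).
have wB : w \in B.
  apply: contraT => wB; have := s_sep Hs (_ : w \in A :\: B) (_ : w' \in B :\: A).
  by rewrite ew; apply; rewrite inE ?wB ?wA ?w'A ?w'B.
have : (w == x) || (w == y) by rewrite -(S_mem _ Hs) inE wA wB.
case/orP => /eqP E; last by move: wC; rewrite E (negbTE yC).
by exists w'; rewrite -?E // inE w'A w'B.
Qed.

Lemma III_connB (T : finType) (e : rel T) A B x y :
  setting e A B x y -> ~~ connect (restr A e) x y -> connect (restr B e) x y.
Proof.
move=> Hs nC; have [xA xB yA yB] := xA Hs.
apply: contraT => nCB.
have yAx : y \notin compo A e x by rewrite inE.
have yBx : y \notin compo B e x by rewrite inE.
have xP : x \in compo A e x :|: compo B e x by rewrite inE compo_self.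
have yP : y \notin compo A e x :|: compo B e x by rewrite inE negb_or yAx yBx.
have [w [w' [_ wP w'P ew]]] := escape (s_conn Hs) xP yP.
move: w'P; rewrite inE negb_or => /andP [w'1 w'2].
have cov : forall v, (v \in A) || (v \in B).
  by move=> v; move: (in_setT v); rewrite -(s_cover Hs) inE.
move: wP; rewrite inE => /orP [] wC.
- have wA := compo_sub xA wC.
  have w'A : w' \notin A by apply: contra w'1 => w'A; apply: compo_step ew.
  have w'B : w' \in B by move: (cov w'); rewrite (negbTE w'A).
  have wB : w \in B.
    apply: contraT => wB; have := s_sep Hs (_ : w \in A :\: B) (_ : w' \in B :\: A).
    by rewrite ew; apply; rewrite inE ?wB ?wA ?w'A ?w'B.
  have : (w == x) || (w == y) by rewrite -(S_mem _ Hs) inE wA wB.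
  case/orP => /eqP E; last by move: wC; rewrite E (negbTE yAx).
  by move: w'2; rewrite -E in xB *; rewrite (compo_step xB (compo_self B e w) w'B ew).
- have wB := compo_sub xB wC.
  have w'B : w' \notin B by apply: contra w'2 => w'B; apply: compo_step ew.
  have w'A : w' \in A by move: (cov w'); rewrite (negbTE w'B) orbF.
  have wA : w \in A.
    apply: contraT => wA; have := s_sep Hs (_ : w' \in A :\: B) (_ : w \in B :\: A).
    by rewrite (s_sym Hs) ew; apply; rewrite inE ?wB ?wA ?w'A ?w'B.
  have : (w == x) || (w == y) by rewrite -(S_mem _ Hs) inE wA wB.
  case/orP => /eqP E; last by move: wC; rewrite E (negbTE yBx).
  by move: w'1; rewrite -E in xA *; rewrite (compo_step xA (compo_self A e w) w'A ew).
Qed.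

Lemma Ax_nbr (T : finType) (e : rel T) A B x y u w :
  setting e A B x y -> ~~ connect (restr A e) x y ->
  u \in compo A e x -> u != x -> e u w -> w \in compo A e x.
Proof.
move=> Hs nC uC ux euw; have [xA xB yA yB] := xA Hs.
have uA := compo_sub xA uC.
have uy : u != y by apply: contraNneq nC => E; move: uC; rewrite E inE.
have uA' := Aprime Hs uA ux uy.
exact: (compo_step xA uC (nbrA Hs uA' euw) euw).
Qed.

Lemma sideIII (T : finType) (e : rel T) A B x y (tx tb : 'I_4) :
  minimal_hyp e -> ~ has_K5_minor e -> setting e A B x y -> ~~ connect (restr A e) x y ->
  tx != tb ->
  exists cs : T -> 'I_4, [/\ forall u v, u \in compo A e x -> v \in compo A e x -> e u v -> cs u != cs v,
    forall a, a \in compo A e x -> a != x -> happy e cs a,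
    cs x = tx &
    exists2 a, e x a & (cs a != tb) && (a \in compo A e x)].
Proof.
move=> Hm HK Hs nC ttb.
have se := s_sym Hs; have ie := s_irr Hs.
have [xA xB yA yB] := xA Hs.
have [b bB exb] := III_nbr Hs nC.
have bA : b \notin A by move: bB; rewrite inE => /andP [].
have bC : b \notin compo A e x by apply: contra bA => /(compo_sub xA).
have CC : graph_connected (srel (compo A e x) e).
  by apply: srel_connected => a c aC cC; apply: compo_induced.
have xC := compo_self A e x.
have [c1 [p1 h1 _]] := ACL_ind Hm HK se ie CC exb bC (exist _ x xC).
have [a aA' exa] := x_Anbr Hs.
have aC : a \in compo A e x.
  by apply: (compo_step xA xC _ exa); move: aA'; rewrite inE => /andP [].
have nax : liftc c1 a != liftc c1 x.
  by apply: (liftc_proper p1) => //; rewrite se.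
have [p [pi px _ pa]] := @perm_lemma (liftc c1 x) (liftc c1 x) (liftc c1 a) tx tx tb (etrans (eqxx _) (esym (eqxx _))).
exists (fun v => p (liftc c1 v)); split.
- by move=> u v uC vC euv; rewrite (inj_eq pi); apply: (liftc_proper p1).
- move=> v vC vx; apply: happy_inj => //.
  apply: (happy_transfer (Hv := vC) (g := e)) => //.
    by move=> w; apply: (Ax_nbr Hs).
  by apply: h1; apply: sub_neq.
- exact: px.
- by exists a => //; rewrite aC andbT pa.
Qed.

Lemma caseIII (T : finType) (e : rel T) A B x y :
  minimal_hyp e -> ~ has_K5_minor e -> setting e A B x y -> ~~ connect (restr A e) x y ->
  dyn4_colorable e.
Proof.
move=> Hm HK Hs nC.
have se := s_sym Hs; have ie := s_irr Hs.
have [xA xB yA yB] := xA Hs.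
have Hs' := setting_swap Hs.
have nC' : ~~ connect (restr A e) y x.
  by apply: contra nC => C; apply: connect_symm (restr_sym A se) C.
have [bx bxB exb] := III_nbr Hs nC.
have [by_ byB eyb] := III_nbr Hs' nC'.
have [a aA exa] := x_Anbr Hs.
have aB : a \notin B by move: aA; rewrite inE => /andP [].
have CB : graph_connected (srel B e) by apply: (conn_B Hs); apply: (III_connB Hs nC).
have [cB0 [pB hB _]] := ACL_ind Hm HK se ie CB exa aB (exist _ x xB).
set cB := liftc cB0.
have bxB1 : bx \in B by move: bxB; rewrite inE => /andP [].
have byB1 : by_ \in B by move: byB; rewrite inE => /andP [].
have bxA : bx \notin A by move: bxB; rewrite inE => /andP [].
have byA : by_ \notin A by move: byB; rewrite inE => /andP [].
have nx : cB x != cB bx by apply: (liftc_proper pB).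
have ny : cB y != cB by_ by apply: (liftc_proper pB).
have [cx [px hx Ex [ax exa' /andP [axc axC]]]] := sideIII Hm HK Hs nC nx.
have [cy [py hy Ey [ay eya' /andP [ayc ayC]]]] := sideIII Hm HK Hs' nC' ny.
set cA := fun v => if v \in compo A e x then cx v else cy v.
have yCx : y \notin compo A e x by rewrite inE.
have covA : forall v, v \in A -> (v \in compo A e x) || (v \in compo A e y).
  move=> v vA; have [s sS Cs] := reach se (s_conn Hs) (s_cover Hs) (s_sep Hs) (s_B Hs) vA.
  move: sS; rewrite (s_S Hs) !inE => /orP [] /eqP E; subst s.
    by rewrite (connect_symm (restr_sym A se) Cs).
  by rewrite (connect_symm (restr_sym A se) Cs) orbT.
have disj : forall v, v \in compo A e y -> v \notin compo A e x.
  by move=> v vC; apply: contraTN vC => vC; apply: (compo_disj se nC vC).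
have cAx : forall v, v \in compo A e x -> cA v = cx v by move=> v vC; rewrite /cA vC.
have cAy : forall v, v \in compo A e y -> cA v = cy v by move=> v vC; rewrite /cA (negbTE (disj _ vC)).
have ExB : cA x = cB x by rewrite cAx ?compo_self.
have EyB : cA y = cB y by rewrite cAy ?compo_self.
apply: (comb (cA := cA) (cB := cB) Hs) => //.
- move=> u v uA vA euv.
  case/orP: (covA u uA) => uC.
    have vC : v \in compo A e x by apply: (compo_step xA uC vA euv).
    by rewrite !cAx //; apply: px.
  have vC : v \in compo A e y by apply: (compo_step yA uC vA euv).
  by rewrite !cAy //; apply: py.
- by move=> u v uB vB euv; apply: (liftc_proper pB).
- move=> v vA'; have vA : v \in A by move: vA'; rewrite inE => /andP [].
  have vx : v != x by apply: contraTneq vA' => ->; rewrite inE xB.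
  have vy : v != y by apply: contraTneq vA' => ->; rewrite inE yB.
  case/orP: (covA v vA) => vC.
    apply: happy_ext (hx _ vC vx) => w evw; rewrite cAx //.
    exact: Ax_nbr Hs nC vC vx evw.
  apply: happy_ext (hy _ vC vy) => w evw; rewrite cAy //.
  exact: Ax_nbr Hs' nC' vC vy evw.
- move=> v vB'; have vB : v \in B by move: vB'; rewrite inE => /andP [].
  apply: (happy_transfer (Hv := vB) (g := e)) => //.
    by move=> w; apply: (nbrB Hs).
  by apply: hB; apply: sub_neq; apply: contraTneq vB' => ->; rewrite inE xA.
- right; exists ax, bx; split => //.
  have axA : ax \in A := compo_sub xA axC.
  rewrite (mix_onA _ _ axA) (mix_onB Hs ExB EyB bxB1) cAx //.
- right; exists ay, by_; split => //.
  have ayA : ay \in A := compo_sub yA ayC.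
  rewrite (mix_onA _ _ ayA) (mix_onB Hs ExB EyB byB1) cAy //.
Qed.

Lemma side_conn (T : finType) (e : rel T) (P Q : {set T}) x y (r : rel T) a b :
  symmetric e -> symmetric r -> graph_connected e -> P :|: Q = setT ->
  (forall u w, u \in P :\: Q -> w \in Q :\: P -> ~~ e u w) -> Q :\: P != set0 ->
  P :&: Q = [set x; y] -> (forall u v, e u v -> r u v) ->
  connect (restr P r) x y -> a \in P -> b \in P -> connect (restr P r) a b.
Proof.
move=> se sr Hc Hcov Hsep HQ HS er Cxy aP bP.
have sR := restr_sym P sr.
have mono : forall u v, connect (restr P e) u v -> connect (restr P r) u v.
  by move=> u v; apply: connect_mono => c d /and3P [cP dP /er ecd]; rewrite /restr cP dP ecd.
have [s1 s1S C1] := reach se Hc Hcov Hsep HQ aP.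
have [s2 s2S C2] := reach se Hc Hcov Hsep HQ bP.
apply: connect_trans (mono _ _ C1) (connect_trans _ (connect_symm sR (mono _ _ C2))).
move: s1S s2S; rewrite HS !inE => /orP [] /eqP -> /orP [] /eqP ->; rewrite ?connect0 //.
exact: connect_symm sR Cxy.
Qed.

Lemma nedges_cond (T : finType) (X : {set T}) (g : rel T) (phi : T -> {set T}) x0 p0 q0 :
  irreflexive g -> (forall u, u \in X -> p0 \in phi u -> u = x0) ->
  (forall u, u \in X -> q0 \in phi u -> u = x0) ->
  forall u v, u \in X -> v \in X -> g u v ->
      ~~ ((p0 \in phi u) && (q0 \in phi v)) /\ ~~ ((q0 \in phi u) && (p0 \in phi v)).
Proof.
move=> ig Hp Hq u v uX vX guv; split; apply/negP => /andP [H1 H2].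
  by move: guv; rewrite (Hp _ uX H1) (Hq _ vX H2) ig.
by move: guv; rewrite (Hq _ uX H1) (Hp _ vX H2) ig.
Qed.

Lemma K_adj (T : finType) (e : rel T) A B x y :
  setting e A B x y -> connect (restr A e) x y ->
  exists2 k, k \in compo (A :\ y) e x & e k y.
Proof.
move=> Hs C; have [xA xB yA yB] := xA Hs.
have xAy : x \in A :\ y by rewrite !inE xA (s_xy Hs).
case: (boolP [exists k, (k \in compo (A :\ y) e x) && e k y]).
  by move=> /existsP [k /andP [? ?]]; exists k.
rewrite negb_exists => /forallP H.
have : y \in compo (A :\ y) e x.
  apply: (closureK (compo_self _ _ _) _ C) => u w uC /and3P [_ wA euw].
  case: (boolP (w == y)) => [/eqP E|wy].
    by move: (H u); rewrite uC -E euw.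
  by apply: (compo_step xAy uC) => //; rewrite !inE wy.
by move/(compo_sub xAy); rewrite !inE eqxx.
Qed.

Definition gxy (T : finType) (e : rel T) (x y : T) : rel T :=
  fun a b => [|| e a b, (a == x) && (b == y) | (a == y) && (b == x)].

Lemma Bneq (T : finType) (e : rel T) A B x y :
  minimal_hyp e -> ~ has_K5_minor e -> setting e A B x y -> ~~ e x y ->
  connect (restr A e) x y ->
  exists cB : T -> 'I_4, [/\ forall u v, u \in B -> v \in B -> e u v -> cB u != cB v,
     forall b, b \in B :\: A -> happy e cB b & cB x != cB y].
Proof.
move=> Hm HK Hs nxy LA.
have se := s_sym Hs; have ie := s_irr Hs; have xy := s_xy Hs.
have [xA xB yA yB] := xA Hs.
have [a aA exa] := x_Anbr Hs.
have aB : a \notin B by move: aA; rewrite inE => /andP [].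
set g := gxy e x y.
have sg : symmetric g.
  by move=> u v; rewrite /g /gxy se; congr (_ || _); rewrite orbC andbC [(u == x) && _]andbC.
have ig : irreflexive g.
  move=> u; rewrite /g /gxy ie /=; apply/negP => /orP [] /andP [/eqP -> /eqP E]; move: xy; by rewrite E eqxx.
have eg : forall u v, e u v -> g u v by move=> u v euv; rewrite /g /gxy euv.
have xAy : x \in A :\ y by rewrite !inE xA xy.
have yx : y != x by rewrite eq_sym.
set K := compo (A :\ y) e x.
have KB : forall v, v \in B -> v \in K -> v = x.
  move=> v vB vK; have vA := compo_sub xAy vK.
  move: vA; rewrite !inE => /andP [vy vA].
  by have := S_mem v Hs; rewrite inE vA vB /= (negbTE vy) orbF => /esym /eqP.
pose phi := fun u => if u == x then K else [set u].
have HK2 : ~ has_K5_minor (srel B g).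
  move=> H5; apply: HK; apply: (model_K5 (phi := phi)) H5.
  - move=> u _; rewrite /phi; case: ifP => _; apply/set0Pn.
      by exists x; apply: compo_self.
    by exists u; rewrite inE.
  - move=> u _; rewrite /phi; case: ifP => _; first exact: compo_induced.
    by move=> c d; rewrite !inE => /eqP -> /eqP ->; rewrite connect0.
  - move=> u v uB vB uv; apply/pred0P => w /=; rewrite /phi.
    apply/negbTE/negP => /andP [].
    case: ifP => [/eqP Eu|nu]; case: ifP => [/eqP Ev|nv].
    + by move: uv; rewrite Eu Ev eqxx.
    + by rewrite inE => wK /eqP Ew; move: nv; rewrite -Ew (KB _ _ wK) ?eqxx // Ew.
    + by rewrite inE => /eqP Ew wK; move: nu; rewrite -Ew (KB _ _ wK) ?eqxx // Ew.
    + by rewrite !inE => /eqP -> /eqP E; move: uv; rewrite E eqxx.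
  - move=> u v uB vB; rewrite /g /gxy => /or3P [euv|/andP [/eqP Eu /eqP Ev]|/andP [/eqP Eu /eqP Ev]].
    + exists u, v; rewrite /phi; split => //.
        by case: ifP => [/eqP ->|_]; [apply: compo_self | rewrite inE].
      by case: ifP => [/eqP ->|_]; [apply: compo_self | rewrite inE].
    + have [k kK eky] := K_adj Hs LA.
      exists k, y; rewrite /phi Eu Ev eqxx (negbTE yx); split => //; by rewrite inE.
    + have [k kK eky] := K_adj Hs LA.
      exists y, k; rewrite /phi Eu Ev eqxx (negbTE yx); split => //; by rewrite ?inE // se.
have Hn : nedges (srel B g) < nedges e.
  apply: (model_nedges (phi := phi) (p0 := x) (q0 := a)) => //.
  - move=> u v uB vB uv; apply/pred0P => w /=; rewrite /phi.
    apply/negbTE/negP => /andP [].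
    case: ifP => [/eqP Eu|nu]; case: ifP => [/eqP Ev|nv].
    + by move: uv; rewrite Eu Ev eqxx.
    + by rewrite inE => wK /eqP Ew; move: nv; rewrite -Ew (KB _ _ wK) ?eqxx // Ew.
    + by rewrite inE => /eqP Ew wK; move: nu; rewrite -Ew (KB _ _ wK) ?eqxx // Ew.
    + by rewrite !inE => /eqP -> /eqP E; move: uv; rewrite E eqxx.
  - move=> u v uB vB; rewrite /g /gxy => /or3P [euv|/andP [/eqP Eu /eqP Ev]|/andP [/eqP Eu /eqP Ev]].
    + exists u, v; rewrite /phi; split => //.
        by case: ifP => [/eqP ->|_]; [apply: compo_self | rewrite inE].
      by case: ifP => [/eqP ->|_]; [apply: compo_self | rewrite inE].
    + have [k kK eky] := K_adj Hs LA.
      exists k, y; rewrite /phi Eu Ev eqxx (negbTE yx); split => //; by rewrite inE.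
    + have [k kK eky] := K_adj Hs LA.
      exists y, k; rewrite /phi Eu Ev eqxx (negbTE yx); split => //; by rewrite ?inE // se.
  - apply: (nedges_cond (x0 := x)) => // u uB; rewrite /phi; case: ifP => [/eqP -> //|_].
      by rewrite inE => /eqP ->.
    rewrite inE => /eqP E; by move: aB; rewrite E uB.
have CB : graph_connected (srel B g).
  apply: srel_connected => c d cB dB.
  apply: (side_conn (Q := A) (x := x) (y := y) se sg (s_conn Hs)) => //.
  - by rewrite setUC (s_cover Hs).
  - exact: sepBA Hs.
  - exact: s_A Hs.
  - by rewrite setIC (s_S Hs).
  - by apply: connect1; rewrite /restr xB yB /g /gxy !eqxx orbT.
have [cB0 [pB hB _]] := ACL Hm (srel_simple B sg ig) CB HK2 Hn (exist _ x xB).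
exists (liftc cB0); split.
- by move=> u v uB vB /eg euv; apply: (liftc_proper pB).
- move=> v vB'; have vB : v \in B by move: vB'; rewrite inE => /andP [].
  have vx : v != x by apply: contraTneq vB' => ->; rewrite inE xA.
  have vy : v != y by apply: contraTneq vB' => ->; rewrite inE yA.
  apply: (happy_transfer (Hv := vB) (g := g)).
  + by move=> w; apply: (nbrB Hs).
  + by move=> w _; rewrite /g /gxy (negbTE vx) (negbTE vy) orbF.
  by apply: hB; apply: sub_neq.
- by apply: (liftc_proper pB) => //; rewrite /g /gxy !eqxx orbT.
Qed.

Definition gid (T : finType) (e : rel T) (x y : T) : rel T :=
  fun a b => [|| e a b, (a == x) && e y b | (b == x) && e a y].

Lemma Beq (T : finType) (e : rel T) A B x y :
  minimal_hyp e -> ~ has_K5_minor e -> setting e A B x y -> ~~ e x y ->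
  connect (restr A e) x y ->
  (forall w, w \in B :\: A -> nbhd e w != [set x; y]) ->
  exists cB : T -> 'I_4, [/\ forall u v, u \in B -> v \in B -> e u v -> cB u != cB v,
     forall b, b \in B :\: A -> happy e cB b & cB x = cB y].
Proof.
move=> Hm HK Hs nxy LA nW.
have se := s_sym Hs; have ie := s_irr Hs; have xy := s_xy Hs.
have yx : y != x by rewrite eq_sym.
have [xA xB yA yB] := xA Hs.
have [a aA exa] := x_Anbr Hs.
have aB : a \notin B by move: aA; rewrite inE => /andP [].
set X := B :\ y.
have xX : x \in X by rewrite !inE xB xy.
set g := gid e x y.
have sg : symmetric g.
  move=> u v; rewrite /g /gid se [e y u]se [e v y]se; congr (_ || _).
  by rewrite orbC.
have ig : irreflexive g.
  have nyx : ~~ e y x by rewrite se.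
  by move=> u; rewrite /g /gid ie /=; apply/negP => /orP [] /andP [/eqP -> H]; [move: nyx | move: nxy]; rewrite H.
have eg : forall u v, e u v -> g u v by move=> u v euv; rewrite /g /gid euv.
have AX : forall v, v \in X -> v \in A -> v = x.
  move=> v; rewrite !inE => /andP [vy vB] vA.
  by have := S_mem v Hs; rewrite inE vA vB /= (negbTE vy) orbF => /esym /eqP.
have Aconn : induced_connected e A.
  move=> c d cA dA.
  exact: (side_conn (Q := B) (x := x) (y := y) se se (s_conn Hs) (s_cover Hs) (s_sep Hs) (s_B Hs) (s_S Hs)).
pose phi := fun u => if u == x then A else [set u].
have phid : forall u v, u \in X -> v \in X -> u != v -> [disjoint phi u & phi v].
  move=> u v uX vX uv; apply/pred0P => w /=; rewrite /phi.
  apply/negbTE/negP => /andP [].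
  case: ifP => [/eqP Eu|nu]; case: ifP => [/eqP Ev|nv].
  + by move: uv; rewrite Eu Ev eqxx.
  + by rewrite inE => wA /eqP Ew; move: nv; rewrite -Ew (AX _ _ wA) ?eqxx // Ew.
  + by rewrite inE => /eqP Ew wA; move: nu; rewrite -Ew (AX _ _ wA) ?eqxx // Ew.
  + by rewrite !inE => /eqP -> /eqP E; move: uv; rewrite E eqxx.
have phie : forall u v, u \in X -> v \in X -> g u v -> exists p q, [/\ p \in phi u, q \in phi v & e p q].
  move=> u v uX vX; rewrite /g /gid => /or3P [euv|/andP [/eqP Eu eyv]|/andP [/eqP Ev euy]].
  + exists u, v; rewrite /phi; split => //.
      by case: ifP => [/eqP ->|_]; rewrite ?inE.
    by case: ifP => [/eqP ->|_]; rewrite ?inE.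
  + exists y, v; rewrite /phi Eu eqxx; split => //.
    by case: ifP => [/eqP ->|_]; rewrite ?inE.
  + exists u, y; rewrite /phi Ev eqxx; split => //.
    by case: ifP => [/eqP ->|_]; rewrite ?inE.
have HK2 : ~ has_K5_minor (srel X g).
  move=> H5; apply: HK; apply: (model_K5 (phi := phi)) H5 => //.
  - move=> u _; rewrite /phi; case: ifP => _; apply/set0Pn.
      by exists x.
    by exists u; rewrite inE.
  - move=> u _; rewrite /phi; case: ifP => _; first exact: Aconn.
    by move=> c d; rewrite !inE => /eqP -> /eqP ->; rewrite connect0.
have Hn : nedges (srel X g) < nedges e.
  apply: (model_nedges (phi := phi) (p0 := x) (q0 := a)) => //.
  apply: (nedges_cond (x0 := x)) => // u uX; rewrite /phi; case: ifP => [/eqP -> //|_].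
    by rewrite inE => /eqP ->.
  by rewrite inE => /eqP E; move: uX aB; rewrite E !inE => /andP [_ ->].
have CX : graph_connected (srel X g).
  have key : forall w, w \in B -> (w == y) || connect (restr X g) x w.
    move=> w wB.
    have covBA : B :|: A = setT by rewrite setUC (s_cover Hs).
    have [s sS Cs] := reach se (s_conn Hs) covBA (sepBA Hs) (s_A Hs) wB.
    have Cs' := connect_symm (restr_sym B se) Cs.
    have sK : s \in [set w | (w == y) || connect (restr X g) x w].
      move: sS; rewrite setIC (s_S Hs) !inE => /orP [] /eqP ->; by rewrite ?connect0 ?eqxx ?orbT.
    have := closureK sK _ Cs'; rewrite inE; apply.
    move=> u1 v1; rewrite !inE => /orP [/eqP Eu1|Cu1] /and3P [u1B v1B eu1v1].
      case: (boolP (v1 == y)) => //= v1y; subst u1.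
      case: (boolP (v1 == x)) => [/eqP ->|v1x]; first by rewrite connect0.
      apply: connect1; rewrite /restr xX !inE v1y v1B /g /gid eqxx eu1v1.
      by rewrite orbT.
    case: (boolP (v1 == y)) => //= v1y.
    have u1X : u1 \in X.
      by rewrite !inE u1B andbT; apply: contraTneq Cu1 => ->; apply/negP => /(restr_in xX); rewrite !inE eqxx.
    by apply: connect_trans Cu1 (connect1 _); rewrite /restr u1X !inE v1y v1B /g /gid eu1v1.
  apply: srel_connected => c d cX dX.
  have cB : c \in B by move: cX; rewrite !inE => /andP [].
  have dB : d \in B by move: dX; rewrite !inE => /andP [].
  have cy : c != y by move: cX; rewrite !inE => /andP [].
  have dy : d != y by move: dX; rewrite !inE => /andP [].
  have := key c cB; rewrite (negbTE cy) /= => Cc.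
  have := key d dB; rewrite (negbTE dy) /= => Cd.
  exact: connect_trans (connect_symm (restr_sym X sg) Cc) Cd.
have [cB0 [pB hB _]] := ACL Hm (srel_simple X sg ig) CX HK2 Hn (exist _ x xX).
exists (fun v => if v == y then liftc cB0 x else liftc cB0 v); split.
- move=> u v uB vB euv.
  have uv : u != v by apply: contraTneq euv => ->; rewrite ie.
  have gen : forall u v, u \in B -> v \in B -> u != y -> e u v -> v == y -> liftc cB0 u != liftc cB0 x.
    move=> u' v' u'B v'B u'y eu /eqP Ev; subst v'.
    have u'x : u' != x by apply: contraTneq eu => ->; rewrite (negbTE nxy).
    apply: (liftc_proper pB) => //; first by rewrite !inE u'y u'B.
    by rewrite /g /gid eqxx eu !orbT.
  case: (boolP (u == y)) => uy; case: (boolP (v == y)) => vy.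
  + by move: uv; rewrite (eqP uy) (eqP vy) eqxx.
  + by rewrite eq_sym; apply: (gen v u) => //; rewrite se.
  + exact: (gen u v).
  + apply: (liftc_proper pB); rewrite ?inE ?uy ?vy ?uB ?vB //.
    exact: eg.
- move=> b bB'; have bB : b \in B by move: bB'; rewrite inE => /andP [].
  have bx : b != x by apply: contraTneq bB' => ->; rewrite inE xA.
  have by_ : b != y by apply: contraTneq bB' => ->; rewrite inE yA.
  have bX : b \in X by rewrite !inE by_ bB.
  have hb := hB _ (sub_neq bX xX bx).
  set cB := fun v => if v == y then liftc cB0 x else liftc cB0 v.
  have back : forall h, g b (val h) -> exists n, e b n /\ cB n = cB0 h.
    move=> h; rewrite /g /gid (negbTE bx) /= => /orP [ebh|/andP [/eqP Eh eby]].
      exists (val h); split => //; rewrite /cB.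
      have hy : val h != y by have := valP h; rewrite !inE => /andP [].
      by rewrite (negbTE hy) liftcE.
    by exists y; split => //; rewrite /cB eqxx -Eh liftcE.
  case: (boolP (1 < #|[set w | e b w]|)) => Hc; last by left; rewrite leqNgt.
  right.
  have two : exists h1 h2 : {v | v \in X}, [/\ g b (val h1), g b (val h2) & h1 != h2].
    pose fi := fun n => if n == y then x else n.
    have fiX : forall n, n \in B -> fi n \in X.
      by move=> n nB; rewrite /fi; case: ifP => // ny; rewrite !inE ny nB.
    have fig : forall n, e b n -> g b (fi n).
      move=> n ebn; rewrite /fi; case: ifP => [/eqP E|_]; last exact: eg.
      by rewrite /g /gid eqxx -E se ebn !orbT.
    have nbB : forall n, e b n -> n \in B by move=> n; apply: (nbrB Hs).
    have pick2 : forall n1 n2, e b n1 -> e b n2 -> fi n1 != fi n2 ->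
        exists h1 h2 : {v | v \in X}, [/\ g b (val h1), g b (val h2) & h1 != h2].
      move=> n1 n2 e1 e2 d12.
      exists (exist (fun v => v \in X) (fi n1) (fiX _ (nbB _ e1))), (exist (fun v => v \in X) (fi n2) (fiX _ (nbB _ e2))); split => /=.
      - exact: fig.
      - exact: fig.
      - by apply: contra d12 => /eqP [->].
    move/card_gt1P: Hc => [n1 [n2 [n1N n2N d12]]].
    rewrite !inE in n1N n2N.
    case: (boolP (fi n1 == fi n2)) => E12; last exact: pick2 E12.
    case: (boolP [exists n, [&& e b n, n != x & n != y]]).
      move=> /existsP [n3 /and3P [e3 n3x n3y]].
      case: (boolP (fi n3 == fi n1)) => E31; last exact: pick2 E31.
      exfalso.
      have fiE : forall n, fi n = n3 -> n = n3.
        by move=> n; rewrite /fi; case: ifP => // _ E; move: n3x; rewrite -E eqxx.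
      have En3 : fi n3 = n3 by rewrite /fi (negbTE n3y).
      have E1 : n1 = n3 by apply: fiE; rewrite -En3; apply/eqP; rewrite eq_sym.
      have E2 : n2 = n3 by apply: fiE; rewrite -(eqP E12) -En3; apply/eqP; rewrite eq_sym.
      by move: d12; rewrite E1 E2 eqxx.
    rewrite negb_exists => /forallP Hall.
    exfalso; move/negP: (nW _ bB'); apply; apply/eqP/setP => w; rewrite !inE.
    apply/idP/idP.
      by move=> ebw; move: (Hall w); rewrite ebw /= negb_and !negbK orbC.
    have Hn1 : (n1 == x) || (n1 == y) by move: (Hall n1); rewrite n1N /= negb_and !negbK.
    have Hn2 : (n2 == x) || (n2 == y) by move: (Hall n2); rewrite n2N /= negb_and !negbK.
    move=> /orP [] /eqP ->.
      case/orP: Hn1 => /eqP E1; first by rewrite -E1.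
      case/orP: Hn2 => /eqP E2; first by rewrite -E2.
      by move: d12; rewrite E1 E2 eqxx.
    case/orP: Hn1 => /eqP E1; last by rewrite -E1.
    case/orP: Hn2 => /eqP E2; last by rewrite -E2.
    by move: d12; rewrite E1 E2 eqxx.
  case: hb => [H1|[h1 [h2 [g1 g2 c12]]]].
    exfalso; move: H1; rewrite leqNgt => /negP; apply.
    have [h1 [h2 [g1 g2 d]]] := two.
    by apply/card_gt1P; exists h1, h2; rewrite !inE.
  have [n1 [e1 E1]] := back _ g1.
  have [n2 [e2 E2]] := back _ g2.
  by exists n1, n2; rewrite /cB in E1 E2 *; rewrite E1 E2.
- by rewrite eqxx (negbTE xy).
Qed.

Lemma comb2 (T : finType) (e : rel T) A B x y (cA cB0 : T -> 'I_4) (p : 'I_4 -> 'I_4) :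
  setting e A B x y -> injective p ->
  (forall u v, u \in A -> v \in A -> e u v -> cA u != cA v) ->
  (forall u v, u \in B -> v \in B -> e u v -> cB0 u != cB0 v) ->
  p (cB0 x) = cA x -> p (cB0 y) = cA y ->
  (forall a, a \in A :\: B -> happy e cA a) ->
  (forall b, b \in B :\: A -> happy e cB0 b) ->
  happy e (mix A cA (fun v => p (cB0 v))) x -> happy e (mix A cA (fun v => p (cB0 v))) y ->
  dyn4_colorable e.
Proof.
move=> Hs pi HA HB Ex Ey hA hB hx hy.
apply: (comb (cA := cA) (cB := fun v => p (cB0 v)) Hs) => //.
- by move=> u v uB vB euv; rewrite (inj_eq pi); apply: HB.
- by move=> b bB; apply: happy_inj => //; apply: hB.
Qed.

Lemma finishA (T : finType) (e : rel T) A B x y (cA cB0 : T -> 'I_4) :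
  setting e A B x y ->
  (forall u v, u \in A -> v \in A -> e u v -> cA u != cA v) ->
  (forall u v, u \in B -> v \in B -> e u v -> cB0 u != cB0 v) ->
  (forall a, a \in A :\: B -> happy e cA a) ->
  (forall b, b \in B :\: A -> happy e cB0 b) ->
  hapin e cA A x -> hapin e cA A y ->
  (cB0 x == cB0 y) = (cA x == cA y) ->
  dyn4_colorable e.
Proof.
move=> Hs HA HB hA hB hx hy Heq.
have [p [pi px py _]] := @perm_lemma (cB0 x) (cB0 y) (cA x) (cA x) (cA y) (cA x) Heq.
apply: (comb2 (cA := cA) (cB0 := cB0) Hs pi) => //.
- by apply: (hapin_happy (X := A) (c1 := cA)) => [u uA|//]; rewrite mix_onA.
- by apply: (hapin_happy (X := A) (c1 := cA)) => [u uA|//]; rewrite mix_onA.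
Qed.

Lemma caseII (T : finType) (e : rel T) A B x y :
  minimal_hyp e -> ~ has_K5_minor e -> setting e A B x y -> ~~ e x y ->
  connect (restr A e) x y -> (exists2 b, b \in B :\: A & e x b) ->
  ((exists2 w, w \in B :\: A & nbhd e w = A :&: B) ->
     (exists x0 y0, [/\ x0 \in A :&: B, y0 \in A :&: B & e x0 y0]) \/
     (exists2 w, w \in A :\: B & nbhd e w = A :&: B)) ->
  dyn4_colorable e.
Proof.
move=> Hm HK Hs nxy LA [b bB exb] Hii.
have se := s_sym Hs; have ie := s_irr Hs; have xy := s_xy Hs.
have [xA xB yA yB] := xA Hs.
have [a aA exa] := x_Anbr Hs.
have bA : b \notin A by move: bB; rewrite inE => /andP [].
have bB1 : b \in B by move: bB; rewrite inE => /andP [].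
have aA1 : a \in A by move: aA; rewrite inE => /andP [].
have CA : graph_connected (srel A e) by apply: (conn_A Hs).
have [cA0 [pA hA R]] := ACL_ind Hm HK se ie CA exb bA (exist _ x xA).
set cA := liftc cA0.
have PA : forall u v, u \in A -> v \in A -> e u v -> cA u != cA v.
  by move=> u v uA vA euv; apply: (liftc_proper pA).
have HA : forall a, a \in A :\: B -> happy e cA a.
  move=> v vA'; have vA : v \in A by move: vA'; rewrite inE => /andP [].
  apply: (happy_transfer (Hv := vA) (g := e)) => //.
    by move=> w; apply: (nbrA Hs).
  by apply: hA; apply: sub_neq; apply: contraTneq vA' => ->; rewrite inE xB.
have hy : hapin e cA A y.
  apply: (hapin_transfer (Hv := yA)) => //; first exact: s_dy Hs.
  by apply: hA; apply: sub_neq; rewrite eq_sym.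
case: R => [hx0|[al [Hal Hnal]]].
  have hx : hapin e cA A x by apply: (hapin_transfer (Hv := xA)) => //; exact: s_dx Hs.
  case: (boolP (cA x == cA y)) => Exy.
    have nW : forall w, w \in B :\: A -> nbhd e w != [set x; y].
      move=> w wB; apply/negP => /eqP Ew.
      case: Hii; first by exists w => //; rewrite Ew (s_S Hs).
        move=> [x0 [y0 [x0S y0S e0]]].
        move: e0 x0S y0S; rewrite (s_S Hs) !inE => e0 /orP [] /eqP E1 /orP [] /eqP E2; move: e0; rewrite E1 E2.
        - by rewrite ie.
        - by rewrite (negbTE nxy).
        - by rewrite se (negbTE nxy).
        - by rewrite ie.
      move=> [w' wA Ew']; rewrite (s_S Hs) in Ew'.
      case: (HA _ wA) => [Hc|[u1 [u2 [e1 e2 c12]]]].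
        by move: Hc; rewrite -/(nbhd e w') Ew' cards2 xy.
      have : u1 \in nbhd e w' by rewrite inE.
      have : u2 \in nbhd e w' by rewrite inE.
      rewrite Ew' !inE => /orP [] /eqP E2 /orP [] /eqP E1; move: c12; rewrite E1 E2 ?eqxx //.
        by rewrite (eqP Exy) eqxx.
      by rewrite (eqP Exy) eqxx.
    have [cB [PB HB EB]] := Beq Hm HK Hs nxy LA nW.
    by apply: (finishA (cA := cA) (cB0 := cB) Hs) => //; rewrite EB Exy eqxx.
  have [cB [PB HB EB]] := Bneq Hm HK Hs nxy LA.
  by apply: (finishA (cA := cA) (cB0 := cB) Hs) => //; rewrite (negbTE EB) (negbTE Exy).
have [cB [PB HB EB]] := Bneq Hm HK Hs nxy LA.
have xy' : exist (fun v => v \in A) y yA != exist _ x xA by apply: sub_neq; rewrite eq_sym.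
have nexy : ~~ srel A e (exist _ x xA) (exist _ y yA) by [].
have /andP [ya yx] := Hnal _ xy' nexy.
have cAa : cA a = al by rewrite /cA (liftcE cA0 (exist _ a aA1)); apply: Hal.
have cAy : cA y != al by rewrite /cA (liftcE cA0 (exist _ y yA)).
have cAyx : cA y != cA x by rewrite /cA (liftcE cA0 (exist _ y yA)) (liftcE cA0 (exist _ x xA)).
have Heq : (cB x == cB y) = (cA x == cA y) by rewrite (negbTE EB) eq_sym (negbTE cAyx).
have [p [pi px py pb]] := @perm_lemma (cB x) (cB y) (cB b) (cA x) (cA y) al Heq.
apply: (comb2 (cA := cA) (cB0 := cB) Hs pi) => //.
- right; exists a, b; split => //.
  rewrite (mix_onA _ _ aA1) (mix_onB (cA := cA) (cB := fun v => p (cB v)) Hs) //; try by rewrite ?px ?py.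
  rewrite cAa.
  case: (boolP (cB b == cB y)) => [/eqP ->|by_]; first by rewrite py eq_sym.
  rewrite eq_sym; apply: pb => //.
  rewrite eq_sym; exact: PB exb.
- by apply: (hapin_happy (X := A) (c1 := cA)) => [u uA|//]; rewrite mix_onA.
Qed.

Lemma core (T : finType) (e : rel T) A B x y :
  minimal_hyp e -> ~ has_K5_minor e -> setting e A B x y ->
  (exists2 b, b \in B :\: A & e x b) ->
  ((exists2 w, w \in B :\: A & nbhd e w = A :&: B) ->
     (exists x0 y0, [/\ x0 \in A :&: B, y0 \in A :&: B & e x0 y0]) \/
     (exists2 w, w \in A :\: B & nbhd e w = A :&: B)) ->
  dyn4_colorable e.
Proof.
move=> Hm HK Hs Hb Hii.
case: (boolP (e x y)) => exy; first exact: caseI Hm HK Hs exy Hb.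
case: (boolP (connect (restr A e) x y)) => LA.
  exact: caseII Hm HK Hs exy LA Hb Hii.
exact: caseIII Hm HK Hs LA.
Qed.

Theorem lemma3p1 (T : finType) (e : rel T) :
  simple_graph e -> graph_connected e -> ~ has_K5_minor e -> ~ iso_C5 e ->
  ~ dyn4_colorable e ->
  (forall (T' : finType) (e' : rel T'),
      simple_graph e' -> graph_connected e' -> ~ has_K5_minor e' -> ~ iso_C5 e' ->
      nedges e' < nedges e -> dyn4_colorable e') ->
  ~ exists A B : {set T},
      [/\ separation e A B,
          #|A :&: B| = 2,
          (forall v, v \in A :&: B -> 2 <= #|[set u in A | e v u]|) &
          ((exists2 w, w \in B :\: A & nbhd e w = A :&: B) ->
             (exists x y, [/\ x \in A :&: B, y \in A :&: B & e x y]) \/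
             (exists2 w, w \in A :\: B & nbhd e w = A :&: B))].
Proof.
move=> [se ie] Hconn HK5 _ Hndyn Hmin [A [B [[Hcov HA HB Hsep] Hcard Hdeg Hii]]].
have /cards2P [x [y [xy HS]]] : #|A :&: B| == 2 by rewrite Hcard.
have Hs : setting e A B x y.
  split => //.
  - by apply: Hdeg; rewrite HS !inE eqxx.
  - by apply: Hdeg; rewrite HS !inE eqxx orbT.
apply: Hndyn.
have [s [sS sB [b bB esb]]] := some_Bnbr Hs.
case/orP: sS => /eqP Es; subst s.
  by apply: (core Hmin HK5 Hs) => //; exists b.
by apply: (core Hmin HK5 (setting_swap Hs)) => //; exists b.
Qed.
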